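(* Let $\lambda\in\mathbf{C}$ with $\lambda\neq1$, let $r,n\in\mathbf{Z}_{+}$ (nonnegative integers), and let $p(x)\in\mathbb{P}_{n}(\lambda)$ be written as $p(x)=\sum_{k=0}^{n}C_{k}H_{k}^{(r)}(x\vert\lambda)$ with $C_{k}\in\mathbf{Q}(\lambda)$. Then for each $k=0,\dots,n$, \[ C_{k}=\frac{1}{(1-\lambda)^{r}k!}\sum_{j=0}^{r}\binom{r}{j}(-\lambda)^{r-j}D^{k}p(j), \] that is, \[ p(x)=\frac{1}{(1-\lambda)^{r}}\sum_{k=0}^{n}\Bigl(\sum_{j=0}^{r}\frac{1}{k!}\binom{r}{j}(-\lambda)^{r-j}D^{k}p(j)\Bigr)H_{k}^{(r)}(x\vert\lambda). \]
   Context: For $\lambda\in\mathbf{C}$, $\lambda\neq1$, and $r\in\mathbf{Z}_{+}$, the Frobenius–Euler polynomials of order $r$ are defined by $\left(\frac{1-\lambda}{e^{t}-\lambda}\right)^{r}e^{xt}=\sum_{n=0}^{\infty}H_{n}^{(r)}(x\vert\lambda)\frac{t^{n}}{n!}$; each $H_n^{(r)}(x\vert\lambda)$ is monic of degree $n$ with coefficients in $\mathbf{Q}(\lambda)$. $\mathbb{P}_{n}(\lambda)$ is the $\mathbf{Q}(\lambda)$-vector space of polynomials in $x$ with coefficients in $\mathbf{Q}(\lambda)$ of degree at most $n$, and $\{H_0^{(r)}(x\vert\lambda),\dots,H_n^{(r)}(x\vert\lambda)\}$ is a basis of it. $D$ denotes differentiation $d/dx$, and $D^kp(j)$ is the $k$-th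 derivative of $p$ evaluated at $x=j$. *)

(* Defs.v *)
From mathcomp Require Import all_boot all_order all_algebra.
Set Implicit Arguments. Unset Strict Implicit. Unset Printing Implicit Defensive.
Import GRing.Theory.
Local Open Scope ring_scope.

(* Formal power series in t are represented by their coefficient sequences
   nat -> R (coefficient of t^m, ordinary, not divided by m!). *)
Section Series.
Variable R : comNzRingType.
Definition serone : nat -> R := fun m => (m == 0%N)%:R.
Definition sermul (f g : nat -> R) : nat -> R :=
  fun m => \sum_(i < m.+1) f i * g (m - i)%N.
Definition serpow (f : nat -> R) (k : nat) : nat -> R := iter k (sermul f) serone.
End Series.

Section FrobeniusEuler.
Variable K : fieldType.

(* multiplicative inverse of a series f with invertible constant term f 0:
   1/f = f0^-1 * sum_k (1 - f/f0)^k ; (1 - f/f0) has zero constant term so the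
   sum is finite coefficientwise. *)
Definition serinv (f : nat -> {poly K}) : nat -> {poly K} :=
  let c := (f 0%N)^-1 in
  let g := fun m => serone _ m - c * f m in
  fun m => c * \sum_(k < m.+1) serpow g k m.

(* e^t - lambda, with constant polynomial coefficients *)
Definition exp_minus (lam : K) : nat -> {poly K} :=
  fun m => ((m`!%:R)^-1 - (m == 0%N)%:R * lam)%:P.

(* e^{x t}, x the polynomial variable *)
Definition exp_xt : nat -> {poly K} := fun m => (m`!%:R)^-1 *: 'X^m.

(* ((1-lambda)/(e^t-lambda))^r e^{xt} *)
Definition FE_gf (lam : K) (r : nat) : nat -> {poly K} :=
  sermul (serpow (fun m => (1 - lam)%:P * serinv (exp_minus lam) m) r) exp_xt.

Definition FEpoly (lam : K) (r n : nat) : {poly K} := n`!%:R *: FE_gf lam r n.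
End FrobeniusEuler.

(* Main.v *)
Require Import Defs.
From mathcomp Require Import all_boot all_order all_algebra.
From mathcomp Require Import ring zify.
Set Implicit Arguments. Unset Strict Implicit. Unset Printing Implicit Defensive.
Import GRing.Theory.
Local Open Scope ring_scope.

Section Trunc.
Variable R : comNzRingType.
Definition Tp (N : nat) (f : nat -> R) : {poly R} := \poly_(i < N.+1) f i.
Definition tr N (p : {poly R}) := take_poly N.+1 p.

Lemma trMl N p q : tr N (tr N p * q) = tr N (p * q).
Proof.
apply/polyP=> i; rewrite !coef_take_poly; case: ifP => // hi.
rewrite !coefM; apply: eq_bigr => j _; rewrite coef_take_poly.
have := ltn_ord j; have -> : (j < N.+1)%N by move: hi (ltn_ord j); lia.
by [].
Qed.

Lemma trMr N p q : tr N (p * tr N q) = tr N (p * q).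
Proof. by rewrite mulrC trMl mulrC. Qed.

Lemma Tp_sermul N f g : Tp N (sermul f g) = tr N (Tp N f * Tp N g).
Proof.
apply/polyP=> i; rewrite coef_take_poly coef_poly; case: ifP => // hi.
rewrite coefM; apply: eq_bigr => j _; rewrite !coef_poly.
have -> : (j < N.+1)%N by move: hi (ltn_ord j); lia.
by have -> : (i - j < N.+1)%N by move: hi (ltn_ord j); lia.
Qed.

Lemma Tp_serone N : Tp N (serone R) = 1.
Proof.
apply/polyP=> i; rewrite coef_poly coef1 /serone; case: ifP => //.
by case: i.
Qed.

Lemma tr1 N : tr N 1 = 1.
Proof. by rewrite /tr take_poly_id // size_poly1. Qed.

Lemma Tp_serpow N f k : Tp N (serpow f k) = tr N (Tp N f ^+ k).
Proof.
elim: k => [|k IH]; first by rewrite expr0 tr1 /serpow /= Tp_serone.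
by rewrite /serpow iterS -/(serpow f k) Tp_sermul IH trMr exprS.
Qed.

Lemma trX N p k : tr N (tr N p ^+ k) = tr N (p ^+ k).
Proof.
elim: k => [|k IH]; first by rewrite !expr0.
by rewrite !exprS trMl -trMr IH trMr.
Qed.

Lemma Tp_coef N f i : (i <= N)%N -> (Tp N f)`_i = f i.
Proof. by move=> h; rewrite coef_poly ltnS h. Qed.

Lemma tr_coef N p i : (i <= N)%N -> (tr N p)`_i = p`_i.
Proof. by move=> h; rewrite coef_take_poly ltnS h. Qed.

Lemma ser_eq f g : (forall N, Tp N f = Tp N g) -> forall N, f N = g N.
Proof. by move=> h N; rewrite -(@Tp_coef N f N (leqnn N)) h Tp_coef. Qed.

Lemma Tp_const N c : Tp N (fun m => c * serone R m) = c%:P.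
Proof.
apply/polyP=> i; rewrite coef_poly coefC /serone; case: i => [|i] //=.
by rewrite mulr1. by rewrite mulr0; case: ifP.
Qed.

Lemma trC N c : tr N c%:P = c%:P.
Proof. by rewrite /tr take_poly_id // (leq_trans (size_polyC_leq1 c)). Qed.

End Trunc.

Section Morph.
Variables (R S : comNzRingType) (phi : {rmorphism R -> S}).
Lemma sermul_morph F G f g : (forall m, F m = phi (f m)) -> (forall m, G m = phi (g m)) ->
  forall m, sermul F G m = phi (sermul f g m).
Proof.
move=> hF hG m; rewrite /sermul rmorph_sum; apply: eq_bigr => i _.
by rewrite rmorphM hF hG.
Qed.
Lemma serpow_morph F f : (forall m, F m = phi (f m)) ->
  forall k m, serpow F k m = phi (serpow f k m).
Proof.
move=> hF; elim=> [|k IH] m.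
  by rewrite /serpow /= /serone rmorph_nat.
rewrite /serpow !iterS -!/(serpow _ k).
exact: sermul_morph.
Qed.
End Morph.

Section K.
Variable K : fieldType.

Definition invK (f : nat -> K) : nat -> K :=
  let c := (f 0%N)^-1 in
  let g := fun m => serone _ m - c * f m in
  fun m => c * \sum_(k < m.+1) serpow g k m.

Lemma serinv_C f m : serinv (fun m => (f m)%:P) m = (invK f m)%:P.
Proof.
rewrite /serinv /invK polyCV rmorphM rmorph_sum /=; congr (_ * _).
apply: eq_bigr => k _.
apply: (@serpow_morph K {poly K} (@polyC K)) => i /=.
by rewrite rmorphB rmorphM /= /serone rmorph_nat.
Qed.

Lemma coefX_low (p : {poly K}) : p`_0 = 0 -> forall k i, (i < k)%N -> (p ^+ k)`_i = 0.
Proof.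
move=> p0; elim=> [|k IH] i // hi.
rewrite exprS coefM big1 // => j _.
case: (nat_of_ord j) (ltn_ord j) => [|j'] hj; first by rewrite p0 mul0r.
by rewrite IH ?mulr0 //; lia.
Qed.

Lemma invK_mul f : f 0%N != 0 -> forall m, sermul (invK f) f m = serone K m.
Proof.
move=> f0; apply: ser_eq => N.
set c := (f 0%N)^-1.
set g := fun m => serone K m - c * f m.
have Tg : Tp N g = 1 - c *: Tp N f.
  apply/polyP=> i; rewrite coefB coefZ coef_poly coef1 /g /serone.
  case: ifP => hi; first by rewrite coef_poly hi.
  by rewrite coef_poly hi mulr0 subr0; case: i hi.
have g0 : (Tp N g)`_0 = 0 by rewrite Tp_coef // /g /serone mulVf // subrr.
have Tinv : Tp N (invK f) = c *: tr N (\sum_(k < N.+1) Tp N g ^+ k).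
  apply/polyP=> i; rewrite coefZ coef_poly coef_take_poly; case: ifP => hi; last by rewrite mulr0.
  rewrite /invK -/c -/g; congr (_ * _).
  rewrite coef_sum (big_ord_widen N.+1 (fun k => serpow g k i) hi) big_mkcond /=.
  apply: eq_bigr => k _; case: ifP => hk.
    by rewrite -(@Tp_coef _ N) ?Tp_serpow ?tr_coef //; lia.
  rewrite coefX_low //; last by lia.
rewrite Tp_sermul Tinv Tp_serone -scalerAl /tr take_polyZ -/(tr _ _) trMl.
rewrite -take_polyZ -/(tr _ _) scalerAr.
have -> : c *: Tp N f = 1 - Tp N g by rewrite Tg opprB addrC subrK.
have -> : (\sum_(k < N.+1) Tp N g ^+ k) * (1 - Tp N g) = 1 - Tp N g ^+ N.+1.
  by rewrite mulrC -opprB mulNr -subrX1 opprB.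
rewrite /tr take_polyD -/(tr _ 1) tr1 [take_poly _ (- _)]linearN /=.
have -> : take_poly N.+1 (Tp N g ^+ N.+1) = 0.
  by apply/polyP=> i; rewrite coef_take_poly coef0; case: ifP => // h; rewrite coefX_low.
by rewrite subr0.
Qed.

End K.

Section L.
Variable K : fieldType.
Hypothesis hK : [pchar K] =i pred0.
Variable lam : K.
Hypothesis hlam : lam != 1.

Definition ee (m : nat) : K := (m`!%:R)^-1 - (m == 0%N)%:R * lam.
Definition E1 (m : nat) : K := (m`!%:R)^-1.
Definition aa (m : nat) : K := (1 - lam) * invK ee m.

Lemma ee0 : ee 0 != 0.
Proof. by rewrite /ee /= invr1 mul1r subr_eq0 eq_sym. Qed.

Lemma sermul_a_e m : sermul aa ee m = (1 - lam) * serone K m.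
Proof.
rewrite -(@invK_mul K ee ee0) /sermul mulr_sumr; apply: eq_bigr => i _.
by rewrite /aa !mulrA.
Qed.

Lemma key r m : sermul (serpow aa r) (serpow ee r) m = (1 - lam) ^+ r * serone K m.
Proof.
move: m; apply: ser_eq => N.
rewrite Tp_sermul !Tp_serpow trMl trMr -exprMn -trX -Tp_sermul.
have -> : Tp N (sermul aa ee) = Tp N (fun m => (1 - lam) * serone K m).
  by apply/polyP => i; rewrite !coef_poly sermul_a_e.
by rewrite !Tp_const -rmorphXn trC.
Qed.

Lemma natK_neq0 n : (0 < n)%N -> (n%:R : K) != 0.
Proof. by move=> h; move/pcharf0P: hK => ->; rewrite -lt0n. Qed.

Lemma E1pow j i : serpow E1 j i = j%:R ^+ i / i`!%:R.
Proof.
elim: j i => [|j IH] i.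
  rewrite /serpow /= /serone expr0n; case: i => [|i] /=; first by rewrite invr1 mulr1.
  by rewrite mul0r.
rewrite /serpow iterS -/(serpow _ j) /sermul.
have -> : (j.+1%:R : K) = j%:R + 1 by rewrite -natr1.
rewrite exprDn mulr_suml; apply: eq_bigr => a _.
rewrite IH /E1 expr1n mulr1 -mulr_natr.
have ha := ltn_ord a.
have hb : ('C(i, a) * (a`! * (i - a)`!))%N = i`! by rewrite bin_fact //; lia.
rewrite -hb !natrM.
have h1 := natK_neq0 (fact_gt0 a); have h2 := natK_neq0 (fact_gt0 (i - a)).
have h3 : ('C(i, a)%:R : K) != 0 by apply: natK_neq0; rewrite bin_gt0; lia.
field; rewrite h1 h2 h3 //.
Qed.

Lemma epow r i : serpow ee r i =
  \sum_(j < r.+1) 'C(r, j)%:R * (- lam) ^+ (r - j) * (j%:R ^+ i / i`!%:R).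
Proof.
have Te : Tp i ee = (- lam)%:P + Tp i E1.
  apply/polyP => k; rewrite coefD coefC !coef_poly /ee /E1.
  by case: ifP => hk; case: k hk => [|k] hk /=; rewrite ?mul1r ?mul0r ?subr0 ?addr0 ?add0r ?oppr0 // addrC.
rewrite -(@Tp_coef _ i _ i) // Tp_serpow Te exprDn tr_coef // coef_sum.
apply: eq_bigr => j _.
rewrite coefMn -rmorphXn coefCM -(@tr_coef _ i) // -Tp_serpow Tp_coef // E1pow.
by rewrite -mulrA mulr_natl.
Qed.
End L.

Section M.
Variable K : fieldType.
Hypothesis hK : [pchar K] =i pred0.
Variable lam : K.
Hypothesis hlam : lam != 1.
Variable r : nat.

Definition phi k (q : {poly K}) : K :=
  \sum_(j < r.+1) 'C(r, j)%:R * (- lam) ^+ (r - j) * (q^`(k)).[j%:R].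

Lemma phi0 k : phi k 0 = 0.
Proof. by rewrite /phi big1 // => j _; rewrite raddf0 horner0 mulr0. Qed.

Lemma phiDZ k P c q : phi k (P + c *: q) = phi k P + c * phi k q.
Proof.
rewrite /phi mulr_sumr -big_split; apply: eq_bigr => j _.
by rewrite derivnD derivnZ hornerD hornerZ /= mulrDr [_ * (c * _)]mulrCA.
Qed.

Lemma phi_lin k n (c : nat -> K) (q : nat -> {poly K}) :
  phi k (\sum_(i < n) c i *: q i) = \sum_(i < n) c i * phi k (q i).
Proof.
elim: n => [|n IH]; first by rewrite !big_ord0 phi0.
by rewrite !big_ord_recr /= phiDZ IH.
Qed.

Lemma phi_X k m : phi k (exp_xt K m) = if (k <= m)%N then serpow (ee lam) r (m - k) else 0.
Proof.
rewrite /phi /exp_xt; case: ifP => hk.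
  rewrite (epow hK hlam); apply: eq_bigr => j _.
  rewrite derivnZ derivnXn hornerZ hornerMn hornerXn.
  have hf : (m ^_ k * (m - k)`!)%N = m`! by rewrite ffact_fact.
  rewrite -mulr_natr -hf natrM.
  have h1 := natK_neq0 hK (fact_gt0 (m - k)).
  have h2 : ((m ^_ k)%:R : K) != 0 by apply: natK_neq0 => //; rewrite ffact_gt0.
  by field; rewrite h1 h2.
rewrite big1 // => j _.
rewrite derivnZ derivnXn ffact_small ?mulr0n ?horner0 ?scaler0 ?mulr0 //; last by rewrite ltnNge hk.
by rewrite horner0 mulr0.
Qed.

Lemma FE_gf_eq l : FE_gf lam r l =
  \sum_(i < l.+1) (serpow (aa lam) r i)%:P * exp_xt K (l - i).
Proof.
rewrite /FE_gf /sermul; apply: eq_bigr => i _; congr (_ * _).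
apply: (@serpow_morph K {poly K} (@polyC K)) => m.
have -> : serinv (exp_minus lam) m = (invK (ee lam) m)%:P by exact: serinv_C.
by rewrite /aa -polyCM.
Qed.

Lemma phi_H k l : phi k (FEpoly lam r l) = (l == k)%:R * (l`!%:R * (1 - lam) ^+ r).
Proof.
have -> : FEpoly lam r l = \sum_(i < l.+1) (l`!%:R * serpow (aa lam) r i) *: exp_xt K (l - i).
  rewrite /FEpoly FE_gf_eq scaler_sumr; apply: eq_bigr => i _.
  by rewrite mul_polyC scalerA.
rewrite (phi_lin k l.+1 (fun i => l`!%:R * serpow (aa lam) r i) (fun i => exp_xt K (l - i))).

under eq_bigr => i _ do rewrite phi_X.
case: (leqP k l) => hkl.
  have -> : (l == k) = (l - k == 0)%N by lia.
  rewrite mulrCA [_ * (1 - lam) ^+ r]mulrC -(key hlam r (l - k)) /sermul mulr_sumr.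
  rewrite (big_ord_widen l.+1 (fun i => l`!%:R * (serpow (aa lam) r i * serpow (ee lam) r (l - k - i)))) ?ltnS ?leq_subr //.
  rewrite [RHS]big_mkcond /=; apply: eq_bigr => i _.
  have hi := ltn_ord i.
  have [h1|h1] := leqP k (l - i); have [h2|h2] := ltnP i (l - k).+1; try lia.
    by rewrite -mulrA; congr (_ * (_ * serpow _ _ _)); lia.
  by rewrite mulr0.
rewrite big1; last by move=> i _; have [h|h] := leqP k (l - i); [lia | rewrite mulr0].
by rewrite ltn_eqF // mul0r.
Qed.
End M.

Unset Implicit Arguments.
Theorem theorem5 (K : fieldType) (hK : [pchar K] =i pred0)
  (lam : K) (hlam : lam != 1) (r n : nat) (p : {poly K}) (C : nat -> K)
  (hp : p = \sum_(k < n.+1) C k *: FEpoly lam r k) :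
  forall k : nat, (k <= n)%N ->
    C k = ((1 - lam) ^+ r * k`!%:R)^-1 *
          \sum_(j < r.+1) 'C(r, j)%:R * (- lam) ^+ (r - j) * (p^`(k)).[j%:R].
Proof.
move=> k hk.
have -> : \sum_(j < r.+1) 'C(r, j)%:R * (- lam) ^+ (r - j) * (p^`(k)).[j%:R]
  = phi lam r k p by [].
rewrite hp phi_lin.
under eq_bigr => l _ do rewrite (phi_H hK hlam).
rewrite (bigD1 (Ordinal (hk : (k < n.+1)%N))) //= big1 ?addr0; last first.
  move=> l hl; have -> : (l == k :> nat) = false.
    by apply/negbTE; move: hl; apply: contra => /eqP h; apply/eqP/val_inj.
  by rewrite mul0r mulr0.
rewrite eqxx mul1r.
have h1 := natK_neq0 hK (fact_gt0 k).
have h2 : (1 - lam) != 0 by rewrite subr_eq0 eq_sym.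
have h3 := expf_neq0 r h2.
by field; rewrite h1 h3.
Qed.
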